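(* Let $T>0$ and let $f:\Omega\times[0,T]\times\mathbb{R}\times\mathbb{R}^d\to\mathbb{R}$ satisfy $f(\cdot,y,z)\in L^2_{\mathcal{F}}(0,T)$ for each $(y,z)$ and $|f(t,y,z)-f(t,y',z')|\le\mu(|y-y'|+|z-z'|)$. For $(t,y,z)\in[0,T]\times\mathbb{R}\times\mathbb{R}^d$ let $(Y^{t,y,z}_s)_{s\in[t,T]}$ solve $Y^{t,y,z}_s=y-\int_t^sf(r,Y^{t,y,z}_r,z)dr+z(B_s-B_t)$. Suppose that for each $(t,y,z)\in[0,T]\times\mathbb{R}\times\mathbb{R}^d$, $$f(\omega,r,Y^{t,y,z}_r,z)\ge0\ (\text{resp. }=0)\quad dr\times dP\text{-a.s. on }[t,T]\times\Omega.$$ Then for each $(y,z)\in\mathbb{R}\times\mathbb{R}^d$, $f(\omega,t,y,z)\ge0$ (resp. $=0$) $dt\times dP$-a.s. on $[0,T]\times\Omega$.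
   Context: $(\Omega,\mathcal{F},P)$ carries a $d$-dimensional Brownian motion $B$ with filtration $\mathcal{F}_t=\sigma\{B_s:s\le t\}$; $L^2_{\mathcal{F}}(0,T)$ denotes real predictable processes $\phi$ with $E\int_0^T|\phi_s|^2ds<\infty$. *)

(* Defs.v *)
From HB Require Import structures.
From mathcomp Require Import all_boot all_order all_algebra.
From mathcomp Require Import all_classical all_reals all_analysis.
Set Implicit Arguments. Unset Strict Implicit. Unset Printing Implicit Defensive.
Import Order.TTheory GRing.Theory Num.Theory.
Import numFieldNormedType.Exports.
Local Open Scope classical_set_scope.
Local Open Scope ring_scope.

Section Defs.
Context {R : realType} {dO : measure_display} {Omega : measurableType dO}.

Definition mutually_independent (P : probability Omega R) (I : finType)
    (X : I -> Omega -> R) : Prop :=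
  forall A : I -> set R, (forall j, measurable (A j)) ->
    P (\bigcap_(j in [set: I]) (X j @^-1` A j)) =
    (\prod_(j : I) P (X j @^-1` A j))%E.

Definition brownian_motion (P : probability Omega R) (d : nat)
    (B : 'I_d -> R -> Omega -> R) : Prop :=
  (forall i t, 0 <= t -> measurable_fun [set: Omega] (B i t)) /\
  (forall i w, B i 0 w = 0) /\
  (forall i w, {within `[0, +oo[, continuous (fun t => B i t w)}) /\
  (* independent Gaussian increments: for 0 <= t_0 < t_1 < ... < t_n the
     d*n real increments B_i(t_{k+1}) - B_i(t_k) are mutually independent and
     B_i(t_{k+1}) - B_i(t_k) ~ N(0, t_{k+1} - t_k) *)
  (forall (n : nat) (tt : 'I_n.+1 -> R),
     0 <= tt ord0 ->
     (forall k : 'I_n, tt (widen_ord (leqnSn n) k) < tt (lift ord0 k)) ->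
     mutually_independent P
       (fun ik : 'I_d * 'I_n =>
          fun w => B ik.1 (tt (lift ord0 ik.2)) w
                   - B ik.1 (tt (widen_ord (leqnSn n) ik.2)) w) /\
     (forall (i : 'I_d) (k : 'I_n) (A : set R), measurable A ->
        P ((fun w => B i (tt (lift ord0 k)) w
                     - B i (tt (widen_ord (leqnSn n) k)) w) @^-1` A) =
        normal_prob 0 (Num.sqrt (tt (lift ord0 k) - tt (widen_ord (leqnSn n) k))) A)).

Definition nat_filtration (d : nat) (B : 'I_d -> R -> Omega -> R) (s : R)
    : set (set Omega) :=
  <<s [set E | exists (i : 'I_d) (r : R) (A : set R),
               0 <= r <= s /\ measurable A /\ E = B i r @^-1` A] >>.

Definition predictable_sets (F : R -> set (set Omega)) (T : R)
    : set (set (Omega * R)) :=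
  <<s [set x : Omega * R | 0 <= x.2 <= T],
      [set E | (exists (s u : R) (A : set Omega),
                  0 <= s < u /\ u <= T /\ F s A /\ E = A `*` `]s, u])
             \/ (exists A : set Omega, F 0 A /\ E = A `*` [set 0])] >>.

Definition L2F (P : probability Omega R) (F : R -> set (set Omega)) (T : R)
    (phi : Omega -> R -> R) : Prop :=
  (forall A : set R, measurable A ->
     predictable_sets F T
       ([set x : Omega * R | 0 <= x.2 <= T] `&`
        (fun x => phi x.1 x.2) @^-1` A)) /\
  (\int[P \x lebesgue_measure]_(x in [set x : Omega * R | (0 <= x.2 <= T)%R])
      ((phi x.1 x.2) ^+ 2)%:E < +oo)%E.

End Defs.

Definition eucl_norm {R : realType} (d : nat) (z : 'I_d -> R) : R :=
  Num.sqrt (\sum_(i < d) z i ^+ 2).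

(* Main.v *)
Require Import Defs.
From HB Require Import structures.
From mathcomp Require Import all_boot all_order all_algebra.
From mathcomp Require Import all_classical all_reals all_analysis.
From mathcomp Require Import ring lra.
Import Order.TTheory GRing.Theory Num.Theory.
Import numFieldNormedType.Exports.
Local Open Scope classical_set_scope.
Local Open Scope ring_scope.
Section Core.
Context {R : realType}.
Notation lam := (@lebesgue_measure R).

Lemma Rint_mono (h : R -> R) (q s r : R) : q <= s -> s <= r ->
  lam.-integrable `[q, r] (EFin \o h) ->
  \int[lam]_(u in `[q, s]) `|h u| <= \int[lam]_(u in `[q, r]) `|h u|.
Proof.
move=> qs sr ih.
have ih' := integrable_norm ih.
have := @Rintegral_itvB R (fun u => `|h u|) (BLeft q) (BRight r) s ih'.
rewrite !bnd_simp => /(_ qs sr) E.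
rewrite -subr_ge0 E; apply: Rintegral_ge0 => x _; exact: normr_ge0.
Qed.

Lemma abs_cont (h : R -> R) (a c : R) :
  lam.-integrable `[a, c] (EFin \o h) ->
  forall e, 0 < e -> exists2 d, 0 < d &
    forall q, a <= q -> c - q < d -> \int[lam]_(u in `[q, c]) `|h u| < e.
Proof.
move=> ih e e0.
have ihp : lam.-integrable setT (EFin \o (h \_ `[a, c])).
  by rewrite -restrict_EFin; apply/integrable_restrict => //=; rewrite setTI.
have [d [d0 Hd]] := integral_normr_continuous ihp e0.
exists d => // q aq cqd.
have : (lam `[q, c] < d%:E)%E.
  rewrite lebesgue_measure_itv/= lte_fin; case: ifPn => _.
    by rewrite -EFinD lte_fin.
  by rewrite lte_fin.
move=> /(Hd _ (measurable_itv _)).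
congr (_ < _); apply: eq_Rintegral => x; rewrite inE/= in_itv/= => /andP[qx xc].
rewrite patchE ifT// inE/= in_itv/= xc andbT; exact: le_trans aq qx.
Qed.


Lemma bcst (k : R) (A : set R) : [bounded k | x in A].
Proof. rewrite /bounded_near; near=> M. move=> x _.
near: M. exact: nbhs_pinfty_ge. Unshelve. all: by end_near. Qed.

Lemma int_cst (k q r : R) : lam.-integrable `[q, r] (fun _ => k%:E).
Proof.
apply: (@measurable_bounded_integrable _ _ _ lam (fun _ => k)) => //.
- by have := lebesgue_measure_itv `[q, r]; move=> /= ->; case: ifPn => _; rewrite ltry.
- exact: bcst.
Qed.

Lemma arith (I JJ mu c e rho t : R) : I <= JJ + mu*(I+c)*t -> JJ < e/6 -> 0 < t -> t < rho ->
  rho*(2*(mu+1)) <= 1 -> rho*(6*(mu*c+1)) <= e -> 0<=mu -> 0<=c -> 0<=I -> 0<e -> I + e/3 <= e.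
Proof.
move=> H1 H2 t0 trho H3 H4 mu0 c0 I0 e0.
have m1 : mu * t * 2 <= 1 by nra.
have m2 : mu * t * c * 6 <= e by nra.
have h : I <= JJ + mu * t * I + mu * t * c by move: H1; clear -I; move=> H1; nra.
nra.
Qed.

Lemma core (T mu y r : R) (g : R -> R -> R) (Yq : R -> R -> R) (b : R -> R)
  (Qs : set R) :
  0 <= mu ->
  (forall u v v', 0 <= u <= T -> `|g u v - g u v'| <= mu * `|v - v'|) ->
  (forall a c, 0 <= a -> a < c -> c <= T -> exists2 q, Qs q & a < q < c) ->
  (forall q, Qs q -> 0 <= q <= T -> forall s, q <= s <= T ->
     lam.-integrable `[q, s] (fun u => (g u (Yq q u))%:E) /\
     Yq q s = y - \int[lam]_(u in `[q, s]) g u (Yq q u) + (b s - b q)) ->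
  (forall e, 0 < e -> exists2 dl, 0 < dl &
     forall u, 0 <= u <= r -> r - u < dl -> `|b u - b r| < e) ->
  0 < r <= T ->
  forall e, 0 < e -> exists q, [/\ Qs q, 0 <= q < r & `|Yq q r - y| <= e].
Proof.
move=> mu0 Lip dense Hy bcont /andP[r0 rT] e e0.
have e6 : 0 < e / 6 by rewrite divr_gt0.
have [d1 d10 Hb] := bcont _ e6.
pose a := Num.max 0 (r - d1).
have ar : a < r by rewrite /a gt_max r0 ltrBlDr ltrDl d10.
have a0 : 0 <= a by rewrite /a le_max lexx.
have [q0 Qq0 /andP[aq0 q0r]] := dense a r a0 ar rT.
have claimA : forall q, Qs q -> a < q -> q < r -> forall s, q <= s <= r ->
    `|Yq q s - y| <= \int[lam]_(u in `[q, r]) `|g u (Yq q u)| + e / 3.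
  move=> q Qq aq qr s /andP[qs sr].
  have q0' : 0 <= q <= T.
    by rewrite (le_trans a0 (ltW aq)) (le_trans (ltW qr) rT).
  have qsT : q <= s <= T by rewrite qs (le_trans sr rT).
  have qrT : q <= r <= T by rewrite (ltW qr) rT.
  have [ints ->] := Hy q Qq q0' s qsT.
  have [intr _] := Hy q Qq q0' r qrT.
  have bs : `|b s - b q| <= e / 3.
    have h1 : `|b s - b r| < e / 6.
      apply: Hb; first by rewrite (le_trans a0 (le_trans (ltW aq) qs)).
      move: aq qs; rewrite /a gt_max => /andP[_]; clear; move=> H H2; lra.
    have h2 : `|b q - b r| < e / 6.
      apply: Hb; first by rewrite (le_trans a0 (ltW aq)) (ltW qr).
      move: aq; rewrite /a gt_max => /andP[_]; clear; move=> H; lra.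
    have -> : b s - b q = (b s - b r) - (b q - b r) by rewrite opprB addrA subrK.
    apply: le_trans (ler_normB _ _) _.
    have -> : e / 3 = e / 6 + e / 6 by clear; field.
    by apply: lerD; apply: ltW.
  set I0 := \int[lam]_(u in `[q, s]) g u (Yq q u).
  have -> : y - I0 + (b s - b q) - y = - I0 + (b s - b q) by ring.
  apply: le_trans (ler_normD _ _) _; rewrite normrN; apply: lerD => //.
  apply: le_trans (le_normr_Rintegral _ _) _ => //.
  exact: Rint_mono.
pose g0 := fun u => g u (Yq q0 u).
have q0T : 0 <= q0 <= T by rewrite (le_trans a0 (ltW aq0)) (le_trans (ltW q0r) rT).
have q0rT : q0 <= r <= T by rewrite (ltW q0r) rT.
have [int0 _] := Hy q0 Qq0 q0T r q0rT.
pose K0 := \int[lam]_(u in `[q0, r]) `|g0 u| + e / 3.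
have K00 : 0 <= K0.
  by rewrite addr_ge0 ?(ltW (divr_gt0 e0 _))// Rintegral_ge0// => x _.
have bnd0 := claimA q0 Qq0 aq0 q0r.
pose c := e / 3 + K0.
have c0 : 0 <= c by rewrite addr_ge0 ?(ltW (divr_gt0 e0 _)).
have [d d0 Hd] := @abs_cont g0 q0 r int0 _ e6.
pose rho := Num.min d (Num.min (1 / (2 * (mu + 1))) (e / (6 * (mu * c + 1)))).
have mc1 : 0 < mu * c + 1 by rewrite ltr_wpDl ?mulr_ge0.
have mu1 : 0 < mu + 1 by rewrite ltr_wpDl.
have rho0 : 0 < rho.
  by rewrite /rho !lt_min d0 !divr_gt0 ?mulr_gt0.
have rhod : rho <= d by rewrite /rho ge_min lexx.
have rho1 : rho * (2 * (mu + 1)) <= 1.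
  rewrite -ler_pdivlMr ?mulr_gt0// /rho ge_min; apply/orP; right.
  by rewrite ge_min lexx.
have rho2 : rho * (6 * (mu * c + 1)) <= e.
  rewrite -ler_pdivlMr ?mulr_gt0// /rho ge_min; apply/orP; right.
  by rewrite ge_min lexx orbT.
pose a' := Num.max q0 (r - rho).
have a'r : a' < r by rewrite /a' gt_max q0r ltrBlDr ltrDl rho0.
have a'0 : 0 <= a' by rewrite /a' le_max (le_trans a0 (ltW aq0)).
have [q Qq /andP[a'q qr]] := dense a' r a'0 a'r rT.
move: a'q; rewrite /a' gt_max => /andP[q0q rq].
have aq : a < q by apply: lt_trans aq0 q0q.
have qT : 0 <= q <= T by rewrite (le_trans a0 (ltW aq)) (le_trans (ltW qr) rT).
have qrT : q <= r <= T by rewrite (ltW qr) rT.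
have [intq _] := Hy q Qq qT r qrT.
exists q; split => //; first by rewrite (le_trans a0 (ltW aq)).
pose I := \int[lam]_(u in `[q, r]) `|g u (Yq q u)|.
have I0 : 0 <= I by rewrite Rintegral_ge0// => x _.
have hA := claimA q Qq aq qr.
have ptw : forall u, q <= u <= r -> `|g u (Yq q u)| <= `|g0 u| + mu * (I + c).
  move=> u /andP[qu ur].
  have u0T : 0 <= u <= T.
    by rewrite (le_trans a0 (le_trans (ltW aq) qu)) (le_trans ur rT).
  have L := Lip u (Yq q u) (Yq q0 u) u0T.
  have h1 := hA u ((ltac:(by rewrite qu ur) : q <= u <= r)).
  have h2 : `|Yq q0 u - y| <= K0 by apply: bnd0; rewrite (le_trans (ltW q0q) qu) ur.
  have h3 : `|Yq q u - Yq q0 u| <= I + c.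
    have -> : Yq q u - Yq q0 u = (Yq q u - y) - (Yq q0 u - y) by ring.
    apply: le_trans (ler_normB _ _) _; rewrite /c addrA; exact: lerD.
  have h4 : `|g u (Yq q u)| <= `|g0 u| + `|g u (Yq q u) - g0 u|.
    have E : g u (Yq q u) = g0 u + (g u (Yq q u) - g0 u) by rewrite addrC subrK.
    by rewrite {1}E; apply: ler_normD.
  apply: le_trans h4 _; rewrite lerD2l; apply: le_trans L _.
  exact: ler_wpM2l.
have intg0q : lam.-integrable `[q, r] (EFin \o (fun u => `|g0 u|)).
  apply: integrable_norm; apply: integrableS int0 => //.
  by apply: subset_itvr; rewrite bnd_simp ltW.
have Ile : I <= \int[lam]_(u in `[q, r]) `|g0 u| + mu * (I + c) * (r - q).
  have := @le_Rintegral _ _ _ lam `[q, r] (fun u => `|g u (Yq q u)|)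
     (fun u => `|g0 u| + mu * (I + c)) (measurable_itv _) (integrable_norm intq).
  rewrite RintegralD//; last exact: int_cst.
  rewrite Rintegral_cst//.
  have := lebesgue_measure_itv `[q, r]; move=> /= ->; rewrite lte_fin qr /=.
  apply => //.
    have := @integrableD _ _ _ lam _ (measurable_itv `[q, r]) _ _ intg0q (int_cst (mu * (I + c)) q r).
    by apply: eq_integrable => // x _ /=; rewrite EFinD.
have J := Hd q (ltW q0q).
have rqd : r - q < d by apply: lt_le_trans rhod; rewrite ltrBlDr -ltrBlDl.
move: (J rqd) => {}J.
have hY := hA r ((ltac:(by rewrite (ltW qr) lexx) : q <= r <= r)).
rewrite -/I in hY; apply: le_trans hY _.
have := @arith I _ mu c e rho (r - q) Ile J; apply => //; first by rewrite subr_gt0.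
by move: rq; clear; move=> H; lra.
Qed.

End Core.
Section Glue.
Context {R : realType} {dO : measure_display} {Omega : measurableType dO}
  (P : probability Omega R).
Notation lam := (@lebesgue_measure R).

Lemma null_sec (N : set (Omega * measurableTypeR R)) : measurable N ->
  (P \x lam)%E N = 0%E ->
  exists K : set Omega, [/\ measurable K, P K = 0%E &
    forall w, ~ K w -> lam (xsection N w) = 0%E].
Proof.
move=> mN N0.
have mphi := measurable_fun_xsection lam mN.
have : (\int[P]_x `|(lam \o xsection N) x|)%E = 0%E.
  rewrite -N0 /product_measure1; apply: eq_integral => x _.
  by rewrite gee0_abs // measure_ge0.
move/(ae_eq_integral_abs _ measurableT mphi) => [K [mK K0 sub]].
exists K; split => // w Kw; apply: contrapT => H; apply: Kw; apply: sub.
by move=> /(_ I) E; exact: H E.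
Qed.

Lemma null_of_sec (N : set (Omega * measurableTypeR R)) (K : set Omega) :
  measurable N -> measurable K -> P K = 0%E ->
  (forall w, ~ K w -> lam (xsection N w) = 0%E) -> (P \x lam)%E N = 0%E.
Proof.
move=> mN mK K0 H.
have mphi := measurable_fun_xsection lam mN.
rewrite /product_measure1 (@ae_eq_integral _ _ _ P setT (cst 0%E)) ?integral0//.
exists K; split => // w /= Hw; apply: contrapT => Kw; apply: Hw => _.
  exact: H.
Qed.

End Glue.
Section Glue2.
Context {R : realType} {dO : measure_display} {Omega : measurableType dO}.

Lemma D_meas (T : R) :
  measurable ([set x : Omega * measurableTypeR R | 0 <= x.2 <= T]).
Proof.
have -> : [set x : Omega * measurableTypeR R | 0 <= x.2 <= T] =
   setT `*` `[0, T].
  by apply/seteqP; split => x /=; rewrite in_itv/=; [move=> H|case].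

apply: measurableX => //; exact: measurable_itv.
Qed.

Lemma pred_meas (F : R -> set (set Omega)) (T : R) :
  (forall s, 0 <= s -> F s `<=` measurable) ->
  predictable_sets F T `<=` (measurable : set (set (Omega * measurableTypeR R))).
Proof.
move=> HF; apply: smallest_sub.
  split.
  - exact: measurable0.
  - by move=> A mA; apply: measurableD => //; exact: D_meas.
  - by move=> A mA; exact: bigcupT_measurable.
move=> E [[s [u [A [/andP[s0 su] [uT [FA ->]]]]]]|[A [FA ->]]].
  apply: measurableX; [exact: HF s s0 A FA| exact: measurable_itv].
apply: measurableX; [exact: HF 0 (lexx 0) A FA| exact: measurable_set1].
Qed.

Lemma filt_meas (d : nat) (B : 'I_d -> R -> Omega -> R) :
  (forall i t, 0 <= t -> measurable_fun [set: Omega] (B i t)) ->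
  forall s, 0 <= s -> nat_filtration B s `<=` measurable.
Proof.
move=> mB s s0; apply: smallest_sub.
  split.
  - exact: measurable0.
  - by move=> A mA; apply: measurableD.
  - by move=> A mA; exact: bigcupT_measurable.
move=> E [i [r [A [/andP[r0 rs] [mA ->]]]]].
by rewrite -[_ @^-1` _]setTI; apply: mB.
Qed.

End Glue2.
Section Cont.
Context {R : realType}.

Lemma sum_cont (d : nat) (h : 'I_d -> R -> R) (r : R) :
  (forall i, {for r, continuous (h i)}) ->
  forall e, 0 < e -> exists2 dl, 0 < dl &
    forall u, `|r - u| < dl -> `|\sum_(i < d) h i u - \sum_(i < d) h i r| < e.
Proof.
move=> hc e e0.
have C : forall s : seq 'I_d, {for r, continuous (fun u => \sum_(i <- s) h i u)}.
  elim => [|i s IH].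
    have -> : (fun u => \sum_(i <- [::]) h i u) = (fun _ => 0).
      by apply/funext => u; rewrite big_nil.
    exact: cvg_cst.
  have -> : (fun u => \sum_(j <- i :: s) h j u) =
     (fun u => h i u + \sum_(j <- s) h j u).
    by apply/funext => u; rewrite big_cons.
  apply: cvgD => //; exact: hc.
move: (C (index_enum 'I_d)) => /cvgrPdist_lt /(_ e e0) /nbhs_ballP [dl dl0 Hdl].
exists dl => // u ru; rewrite distrC; exact: (Hdl u ru).
Qed.

Lemma B_cont (bb : R -> R) (c r : R) : 0 < r ->
  {within `[0, +oo[, continuous bb} -> {for r, continuous (fun t => c * bb t)}.
Proof.
move=> r0 hb.
have hb' : {within `[0, r + 1], continuous bb}.
  apply: continuous_subspaceW hb => x /=; rewrite !in_itv/= => /andP[-> _] //.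
have := within_continuous_continuous _ hb'.
have r1 : 0 < r + 1 by rewrite ltr_wpDl ?ltW.
move=> /(_ r r1); rewrite in_itv/= r0 ltrDl ltr01 => /(_ isT) cb.
by apply: cvgM => //; exact: cvg_cst.
Qed.

End Cont.
Section Main.
Context {R : realType} {dO : measure_display} {Omega : measurableType dO}
  (P : probability Omega R).
Notation lam := (@lebesgue_measure R).

Definition qn (n : nat) : R := if @unpickle rat n is Some q then ratr q else 0.

Lemma qn_dense (a c : R) : a < c -> exists2 q, range qn q & a < q < c.
Proof.
move=> ac; have [q] := rat_in_itvoo ac; rewrite in_itv/= => H.
exists (ratr q) => //; exists (pickle q) => //.
by rewrite /qn pickleK.
Qed.

Lemma eucl0 (d : nat) (z : 'I_d -> R) : eucl_norm (fun i => z i - z i) = 0.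
Proof.
rewrite /eucl_norm big1 ?sqrtr0// => i _; by rewrite subrr expr0n.
Qed.

Lemma glue (d : nat) (B : 'I_d -> R -> Omega -> R) (T mu : R)
  (f : Omega -> R -> R -> ('I_d -> R) -> R)
  (Y : R -> R -> ('I_d -> R) -> R -> Omega -> R) (S : set R)
  (y : R) (z : 'I_d -> R) :
  (forall i t, 0 <= t -> measurable_fun [set: Omega] (B i t)) ->
  (forall i w, {within `[0, +oo[, continuous (fun t => B i t w)}) ->
  L2F P (nat_filtration B) T (fun w t => f w t y z) ->
  (forall (w : Omega) (t y y' : R) (z z' : 'I_d -> R), 0 <= t <= T ->
     `|f w t y z - f w t y' z'| <=
       mu * (`|y - y'| + eucl_norm (fun i => z i - z' i))) ->
  (forall (t : R), 0 <= t <= T ->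
     {ae P, forall w, forall s : R, t <= s <= T ->
        lebesgue_measure.-integrable `[t, s]
          (fun r => (f w r (Y t y z r w) z)%:E) /\
        Y t y z s w = y - Rintegral lebesgue_measure `[t, s]
                            (fun r => f w r (Y t y z r w) z)
                        + \sum_(i < d) z i * (B i s w - B i t w)}) ->
  measurable S ->
  (forall x, (forall e, 0 < e -> exists2 v, S v & `|x - v| <= e) -> S x) ->
  (forall (t : R), 0 <= t <= T ->
      {ae (P \x lebesgue_measure)%E, forall x : Omega * R,
         t <= x.2 <= T -> S (f x.1 x.2 (Y t y z x.2 x.1) z)}) ->
  {ae (P \x lebesgue_measure)%E, forall x : Omega * R,
         0 <= x.2 <= T -> S (f x.1 x.2 y z)}.
Proof.
move=> mB cB L2 Lip HY mS cS HS.
have : forall n, exists N : set (Omega * measurableTypeR R),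
    [/\ measurable N, (P \x lam)%E N = 0%E &
     (0 <= qn n <= T -> forall x, ~ N x -> qn n <= x.2 <= T ->
        S (f x.1 x.2 (Y (qn n) y z x.2 x.1) z))].
  move=> n; have [/HS [N [mN N0 sub]] | nq] := pselect (0 <= qn n <= T).
    exists N; split => // _ x Nx; apply: contrapT => H; exact: Nx (sub x H).
  exists set0; split => //; try exact: measure0; by move=> /nq.
move=> /choice [N HN].
have : forall n, exists M : set Omega,
    [/\ measurable M, P M = 0%E &
     (0 <= qn n <= T -> forall w, ~ M w -> forall s : R, qn n <= s <= T ->
        lebesgue_measure.-integrable `[qn n, s]
          (fun r => (f w r (Y (qn n) y z r w) z)%:E) /\
        Y (qn n) y z s w = y - Rintegral lebesgue_measure `[qn n, s]
                            (fun r => f w r (Y (qn n) y z r w) z)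
                        + \sum_(i < d) z i * (B i s w - B i (qn n) w))].
  move=> n; have [/HY [M [mM M0 sub]] | nq] := pselect (0 <= qn n <= T).
    exists M; split => // _ w Mw; apply: contrapT => H; exact: Mw (sub w H).
  exists set0; split => //; try exact: measure0; by move=> /nq.
move=> /choice [M HM].
have : forall n, exists K : set Omega, [/\ measurable K, P K = 0%E &
    forall w, ~ K w -> lam (xsection (N n) w) = 0%E].
  by move=> n; have [mN N0 _] := HN n; exact: (@null_sec _ _ _ P).
move=> /choice [K HK].
pose E := [set x : Omega * measurableTypeR R | 0 <= x.2 <= T] `&`
   (fun x => f x.1 x.2 y z) @^-1` (~` S).
have mE : measurable E.
  have := @pred_meas _ _ _ (nat_filtration B) T (@filt_meas _ _ _ _ _ mB) _ (L2.1 _ (measurableC mS)).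
  exact.
pose Z := \bigcup_n (M n `|` K n).
have mZ : measurable Z.
  apply: bigcupT_measurable => n; apply: measurableU.
    by have [] := HM n.
  by have [] := HK n.
have Z0 : P Z = 0%E.
  apply: measure_negligible => //; apply: negligible_bigcup => n.
  apply: negligibleU; apply/negligibleP.
  - by have [] := HM n.
  - by have [] := HM n.
  - by have [] := HK n.
  - by have [] := HK n.
exists E; split => //.
  apply: (@null_of_sec _ _ _ P E Z mE mZ Z0) => w Zw.
  have nM : forall n, ~ M n w by move=> n Mn; apply: Zw; exists n => //; left.
  have nK : forall n, ~ K n w by move=> n Kn; apply: Zw; exists n => //; right.
  apply: (measure_negligible (measurable_xsection w mE)).
  apply: (@negligibleS _ _ _ lam ([set 0] `|` \bigcup_n xsection (N n) w)); last first.
    apply: negligibleU.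
      by apply/negligibleP => //; exact: lebesgue_measure_set1.
    apply: negligible_bigcup => n; have [mN _ _] := HN n.
    apply/negligibleP; first exact: measurable_xsection.
    by have [_ _ H3] := HK n; apply: H3; exact: nK.
  move=> r /set_mem [/= Dr nS].
  have [->|r0] := eqVneq r 0; [by left | right].
  apply: contrapT => H.
  have Hn : forall n, ~ N n (w, r).
    by move=> n Nn; apply: H; exists n => //; rewrite /xsection /=; exact: mem_set.
  apply: nS.
  have mu0 : 0 <= mu.
    have T0 : (0:R) <= 0 <= T.
      by apply/andP; split => //; case/andP: Dr => a b; exact: le_trans a b.
    have := Lip w 0 y (y + 1) z z T0.
    rewrite eucl0 addr0 opprD addrA subrr add0r normrN normr1 mulr1.
    exact: le_trans.
  have rT : 0 < r <= T.
    by move: Dr => /andP[r0' ->]; rewrite andbT lt_neqAle eq_sym r0.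
  have r0' : 0 < r by case/andP: rT.
  apply: cS => e e0.
  have mu1 : 0 < mu + 1 by rewrite ltr_wpDl.
  have e1 : 0 < e / (mu + 1) by rewrite divr_gt0.
  have LipH : forall u v v', 0 <= u <= T ->
      `|f w u v z - f w u v' z| <= mu * `|v - v'|.
    by move=> u v v' uT; have := Lip w u v v' z z uT; rewrite eucl0 addr0.
  have HyH : forall q, range qn q -> 0 <= q <= T -> forall s, q <= s <= T ->
     lam.-integrable `[q, s] (fun u => (f w u (Y q y z u w) z)%:E) /\
     Y q y z s w = y - \int[lam]_(u in `[q, s]) f w u (Y q y z u w) z +
       ((fun s => \sum_(i < d) z i * B i s w) s -
        (fun s => \sum_(i < d) z i * B i s w) q).
    move=> _ [n _ <-] qT s qsT.
    have [_ _ H3] := HM n; have [I1 E1] := H3 qT w (nM n) s qsT.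
    split => //; rewrite E1; congr (_ + _).
    by rewrite -sumrB; apply: eq_bigr => i _; rewrite mulrBr.
  have bcont : forall e, 0 < e -> exists2 dl, 0 < dl &
     forall u, 0 <= u <= r -> r - u < dl ->
       `|(fun s => \sum_(i < d) z i * B i s w) u -
         (fun s => \sum_(i < d) z i * B i s w) r| < e.
    move=> e' e'0.
    have [dl dl0 Hdl] := @sum_cont _ d (fun i t => z i * B i t w) r
      (fun i => @B_cont _ (fun t => B i t w) (z i) r r0' (cB i w)) e' e'0.
    exists dl => // u /andP[u0 ur] rud; apply: Hdl.
    by rewrite ger0_norm // subr_ge0.
  have [q [[n _ qE] /andP[q0 qr] Hq]] := @core R T mu y r (fun u v => f w u v z)
     (fun q s => Y q y z s w) (fun s => \sum_(i < d) z i * B i s w) (range qn)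
     mu0 LipH (fun a c a0 ac cT => qn_dense a c ac) HyH bcont rT _ e1.
  subst q.
  exists (f w r (Y (qn n) y z r w) z).
    have [_ _ H3] := HN n.
    have qT : 0 <= qn n <= T by rewrite q0 (le_trans (ltW qr)) //; case/andP: rT.
    have qrT : qn n <= r <= T by rewrite (ltW qr); case/andP: rT.
    exact: (H3 qT (w, r) (Hn n) qrT).
  have ruT : 0 <= r <= T by case/andP: rT => a b; rewrite (ltW a) b.
  apply: le_trans (LipH r y _ ruT) _.
  rewrite distrC; rewrite /= in Hq.
  have HX : `|Y (qn n) y z r w - y| * (mu + 1) <= e by rewrite -ler_pdivlMr.
  move: HX mu0 (normr_ge0 (Y (qn n) y z r w - y)).
  move: (`|Y (qn n) y z r w - y|) => X; clear; move=> *; nra.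
move=> x /= H.
have [Dx|nD] := pselect (0 <= x.2 <= T); last by exfalso; apply: H => /nD.
by split => // Sx; apply: H.
Qed.

End Main.

Theorem lemma5p3 (R : realType) (dO : measure_display)
  (Omega : measurableType dO) (P : probability Omega R) (d : nat)
  (B : 'I_d -> R -> Omega -> R) (T mu : R)
  (f : Omega -> R -> R -> ('I_d -> R) -> R)
  (Y : R -> R -> ('I_d -> R) -> R -> Omega -> R) :
  brownian_motion P B ->
  0 < T ->
  (* f(., y, z) in L^2_F(0,T) for each (y, z) *)
  (forall (y : R) (z : 'I_d -> R),
     L2F P (nat_filtration B) T (fun w t => f w t y z)) ->
  (* Lipschitz condition *)
  (forall (w : Omega) (t y y' : R) (z z' : 'I_d -> R), 0 <= t <= T ->
     `|f w t y z - f w t y' z'| <=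
       mu * (`|y - y'| + eucl_norm (fun i => z i - z' i))) ->
  (* Y^{t,y,z} solves Y_s = y - int_t^s f(r, Y_r, z) dr + z (B_s - B_t) on [t,T] *)
  (forall (t y : R) (z : 'I_d -> R), 0 <= t <= T ->
     {ae P, forall w, forall s : R, t <= s <= T ->
        lebesgue_measure.-integrable `[t, s]
          (fun r => (f w r (Y t y z r w) z)%:E) /\
        Y t y z s w = y - Rintegral lebesgue_measure `[t, s]
                            (fun r => f w r (Y t y z r w) z)
                        + \sum_(i < d) z i * (B i s w - B i t w)}) ->
  ((forall (t y : R) (z : 'I_d -> R), 0 <= t <= T ->
      {ae (P \x lebesgue_measure)%E, forall x : Omega * R,
         t <= x.2 <= T -> 0 <= f x.1 x.2 (Y t y z x.2 x.1) z}) ->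
   forall (y : R) (z : 'I_d -> R),
      {ae (P \x lebesgue_measure)%E, forall x : Omega * R,
         0 <= x.2 <= T -> 0 <= f x.1 x.2 y z})
  /\
  ((forall (t y : R) (z : 'I_d -> R), 0 <= t <= T ->
      {ae (P \x lebesgue_measure)%E, forall x : Omega * R,
         t <= x.2 <= T -> f x.1 x.2 (Y t y z x.2 x.1) z = 0}) ->
   forall (y : R) (z : 'I_d -> R),
      {ae (P \x lebesgue_measure)%E, forall x : Omega * R,
         0 <= x.2 <= T -> f x.1 x.2 y z = 0}).
Proof.
move=> BM T0 L2 Lip HY.
have [mB [_ [cB _]]] := BM.
split.
- move=> Hpos y z.
  apply: (@glue R dO Omega P d B T mu f Y [set v | 0 <= v] y z mB cB (L2 y z)
    Lip (fun t tT => HY t y z tT)).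
  + have -> : [set v : R | 0 <= v] = `[0, +oo[%classic.
      by apply/seteqP; split => v /=; rewrite in_itv/= andbT.
    exact: measurable_itv.
  + move=> x cl; rewrite /=; rewrite leNgt; apply/negP => x0.
    have [v /= v0 H] := cl (- x / 2) ltac:(by rewrite divr_gt0 // oppr_gt0).
    have : v - x <= `|x - v| by rewrite distrC ler_norm.
    move: H v0 x0; clear; move=> *; lra.
  + by move=> t tT; exact: Hpos.
- move=> Hzero y z.
  apply: (@glue R dO Omega P d B T mu f Y [set 0] y z mB cB (L2 y z)
    Lip (fun t tT => HY t y z tT)).
  + exact: measurable_set1.
  + move=> x cl; rewrite /=; apply: contrapT => /eqP x0.
    have nx : 0 < `|x| by rewrite normr_gt0.
    have [v /= -> H] := cl (`|x| / 2) ltac:(by rewrite divr_gt0).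
    move: H nx; rewrite subr0; clear; move=> *; lra.
  + by move=> t tT; exact: Hzero.
Qed.
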